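(* Let $n\ge 3$ and $m\ge 5$ be integers, let $\delta\in\{0,\dots,n-1\}$ with $\gcd(1+\delta,n)=1$, and let $G=\langle x\rangle$ be cyclic of order $n$. Let $\Delta$ be the graph with vertex set $G\times\{0,\dots,m-1\}$ (write $g_i=(g,i)$, $G_i=G\times\{i\}$) whose edges are exactly the following: there are no edges inside $G_0$ or inside $G_3$; $G_1$ and $G_2$ each induce complete graphs; for $i\in\{4,\dots,m-1\}$ the edges inside $G_i$ are $\{g_i,(xg)_i\}$, $g\in G$; $g_0\sim g'_2$ iff $g\ne g'$; $g_2\sim g'_3$ iff $g=g'$; $g_3\sim g'_{m-1}$ iff $g\ne g'$; $g_1\sim g'_4$ iff $g\ne g'$; for $\ell\in\{4,\dots,m-2\}$, $g_\ell\sim g'_{\ell+1}$ iff $g\ne g'$; $g_0\sim g'_3$ for all $g,g'$; $g_0\sim g'_1$ iff $g'g^{-1}=x$; $g_1\sim g'_2$ iff $g'g^{-1}=x^\delta$. Identifying each $g\in G$ with the permutation $y_i\mapsto(yg)_i$ of the vertex set, $\mathrm{Aut}(\Delta)=G$. Consequently, every cyclic group of order at least $3$ admits an $m$-GRR for every $m\ge 5$.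
   Context: An $m$-GRR for a group $G$ is a finite regular simple graph having a semiregular group of automorphisms isomorphic to $G$ with exactly $m$ vertex-orbits and whose full automorphism group is isomorphic to $G$. *)

(* Defs.v *)
From HB Require Import structures.
From mathcomp Require Import all_boot all_order all_algebra all_fingroup.
Set Implicit Arguments. Unset Strict Implicit. Unset Printing Implicit Defensive.
Import GRing.Theory.

(* Cyclic group G = <x> of order n is modelled by the additive group 'Z_n with
   generator x = 1; multiplicative g'g^{-1} = x^k becomes h - g = k%:R,
   and the product x g becomes 1 + g. *)

(* The "basic" (directed) edge list of the graph Delta; the actual adjacency
   is its symmetric closure. Vertices: 'Z_n * 'I_m, (g, i) = g_i. *)
Definition Delta_basic (n m delta : nat) (u v : 'Z_n * 'I_m) : bool :=
  let: (g, i) := u in let: (h, j) := v in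
  let i := nat_of_ord i in let j := nat_of_ord j in
  [|| (i == 1) && (j == 1) && (g != h),
      (i == 2) && (j == 2) && (g != h),
      (4 <= i)%N && (i == j) && (h == 1 + g)%R,
      (i == 0) && (j == 2) && (g != h),
      (i == 2) && (j == 3) && (g == h),
      (i == 3) && (j == m.-1) && (g != h),
      (i == 1) && (j == 4) && (g != h),
      [&& (4 <= i)%N, (i <= m - 2)%N, j == i.+1 & g != h],
      (i == 0) && (j == 3),
      (i == 0) && (j == 1) && (h - g == 1)%R |
      (i == 1) && (j == 2) && (h - g == delta%:R)%R ].

Definition Delta (n m delta : nat) : rel ('Z_n * 'I_m) :=
  fun u v => @Delta_basic n m delta u v || @Delta_basic n m delta v u.
Arguments Delta {n} m delta u v.

Definition Ztrans (n m : nat) (g : 'Z_n) (u : 'Z_n * 'I_m) : 'Z_n * 'I_m :=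
  ((u.1 + g)%R, u.2).

Definition is_aut (V : finType) (e : rel V) (p : {perm V}) : bool :=
  [forall u, forall v, e (p u) (p v) == e u v].

Definition Aut_graph (V : finType) (e : rel V) : {set {perm V}} :=
  [set p | is_aut e p].

Definition mGRR (m : nat) (gT : finGroupType) (G : {group gT}) : Prop :=
  exists (V : finType) (e : rel V),
    [/\ symmetric e, irreflexive e,
        (exists k, forall v : V, #|[set w | e v w]| = k) &
        exists2 A : {group {perm V}}, A \subset Aut_graph e &
          [/\ A \isog G,
              (forall a, a \in A -> forall v, a v = v -> a = 1%g),
              #|[set orbit 'P A v | v : V]| = m &
              Aut_graph e \isog G]].

(* Main.v *)
Require Import Defs.
From mathcomp Require Import all_boot all_order all_algebra all_fingroup all_solvable.
From mathcomp Require Import ring zify.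
Import GRing.Theory.
Set Implicit Arguments. Unset Strict Implicit.

Ltac natsimp := repeat match goal with
 | |- context [(?x == ?y :> nat)] => (have -> : (x == y :> nat) = false by lia) || (have -> : (x == y :> nat) = true by lia)
 | |- context [(?x <= ?y)%N] => (have -> : (x <= y)%N = false by lia) || (have -> : (x <= y)%N = true by lia)
 end.
Ltac bsimp := rewrite ?andbF ?andFb ?orbF ?orFb ?andbT ?andTb ?orbT ?orTb /=.

Section S.
Variables (a k d : nat).
Local Notation n := a.+3.
Local Notation m := k.+1.+4.
Local Notation V := ('Z_n * 'I_m)%type.
Local Notation e := (@Delta n m d).
Local Open Scope ring_scope.
Local Notation D := (d%:R : 'Z_n).

Definition Fn (i j : nat) (g h : 'Z_n) : bool :=
  if i == 0%N then [|| (j == 1%N) && (h == 1 + g), (j == 2%N) && (g != h) | (j == 3%N)]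
  else if i == 1%N then [|| (j == 0%N) && (g == 1 + h), (j == 1%N) && (g != h),
                          (j == 2%N) && (h == D + g) | (j == 4%N) && (g != h)]
  else if i == 2%N then [|| (j == 0%N) && (h != g), (j == 1%N) && (g == D + h),
                          (j == 2%N) && (g != h) | (j == 3%N) && (g == h)]
  else if i == 3%N then [|| (j == 0%N), (j == 2%N) && (g == h) | (j == m.-1) && (g != h)]
  else [|| (j == i) && ((h == 1 + g) || (g == 1 + h)),
           (j == i.+1) && (g != h),
           [&& (i == j.+1), (4 <= j)%N & (g != h)],
           [&& (j == 1%N), (i == 4%N) & (g != h)] |
           [&& (j == 3%N), (i == m.-1) & (g != h)]].

Lemma Nall (g h : 'Z_n) (i j : 'I_m) : e (g, i) (h, j) = Fn i j g h.
Proof.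
rewrite /Fn /Delta /Delta_basic /=.
case: i => i Hi; case: j => j Hj /=.
case: i Hi => [|[|[|[|i]]]] Hi /=;
 case: j Hj => [|[|[|[|j]]]] Hj /=; natsimp; bsimp; rewrite ?subr_eq ?(eq_sym h g) ?orbb //.
by case: (ltngtP i j) => Hij; natsimp; bsimp.
Qed.

Hypothesis cop : coprime d.+1 n.

Lemma nz1 : (1 : 'Z_n) != 0. Proof. exact: oner_neq0. Qed.
Lemma nz2 : (1 + 1 : 'Z_n) != 0.
Proof.
apply/eqP => H. have := congr1 val H. change (((2%:R : 'Z_n) : nat) = 0%N -> False).
by rewrite val_Zp_nat // modn_small.
Qed.
Lemma Dunit : (D + 1) \is a GRing.unit.
Proof. by rewrite natr1 unitZpE // coprime_sym. Qed.
Lemma nzD1 : (D + 1) != 0.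
Proof. apply/eqP => H; have := Dunit; by rewrite H unitr0. Qed.
Lemma nzm1 : (- 1 : 'Z_n) != 0. Proof. by rewrite oppr_eq0 nz1. Qed.
Lemma nzm2 : (- (1 + 1) : 'Z_n) != 0. Proof. by rewrite oppr_eq0 nz2. Qed.
Lemma nzmD1 : (- (D + 1)) != 0. Proof. by rewrite oppr_eq0 nzD1. Qed.
Lemma neqD (x y c : 'Z_n) : c != 0 -> x = c + y -> x != y.
Proof. by move=> Hc ->; rewrite -subr_eq0 addrK. Qed.

Ltac zs := solve [ done | by rewrite eq_sym
 | apply/eqP; ring
 | apply/andP; split; zs
 | apply/orP; left; zs | apply/orP; right; zs
 | apply: (neqD nz1); ring | apply: (neqD nzm1); ring
 | apply: (neqD nz2); ring | apply: (neqD nzm2); ring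
 | apply: (neqD nzD1); ring | apply: (neqD nzmD1); ring ].


Lemma third (g h : 'Z_n) : exists x, (x != g) && (x != h).
Proof.
have : ~~ ([set: 'Z_n] \subset [set g; h]).
  apply/negP => /subset_leq_card; rewrite cardsT card_ord cards2; by case: (g != h).
by case/subsetPn => x _; rewrite !inE negb_or => Hx; exists x.
Qed.

Lemma nb (g h : 'Z_n) : exists x, ((x == 1 + g) || (g == 1 + x)) && (x != h).
Proof.
case: (eqVneq (1 + g) h) => [<-|ne]; last by exists (1 + g); rewrite eqxx.
exists (g - 1); zs.
Qed.

Definition o0 : 'I_m := @Ordinal m 0 erefl.
Definition o1 : 'I_m := @Ordinal m 1 erefl.
Definition o2 : 'I_m := @Ordinal m 2 erefl.
Definition o3 : 'I_m := @Ordinal m 3 erefl.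
Definition o4 : 'I_m := @Ordinal m 4 erefl.

Definition Ap (v : V) := exists w, e v w /\ forall z, ~~ (e v z && e w z).

Ltac adj := rewrite ?Nall /Fn /=; natsimp; bsimp; zs.

Lemma A_layer (v : V) : Ap v -> (v.2 : nat) = 0%N \/ (v.2 : nat) = 3%N.
Proof.
case: v => g [i Hi] [[h [j Hj]] [Hvw Hz]] /=.
move: Hvw; rewrite Nall /Fn /=.
case: (ltnP i 4) => Hi4.
  case: i Hi Hi4 Hz => [|[|[|[|i]]]] Hi Hi4 Hz //=; [by left| | |by right].
  - case/or4P => /andP [/eqP Ej Hgh]; subst j.
    + move/eqP: Hgh => Hg; subst g.
      by case/negP: (Hz (D + (1 + h), o2)); adj.
    + have [x /andP [Hx1 Hx2]] := third g h.
      by case/negP: (Hz (x, o4)); adj.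
    + move/eqP: Hgh => Hg; subst h.
      by case/negP: (Hz (g - 1, o0)); adj.
    + have [x /andP [Hx1 Hx2]] := third g h.
      by case/negP: (Hz (x, o1)); adj.
  - case/or4P => /andP [/eqP Ej Hgh]; subst j.
    + by case/negP: (Hz (g, o3)); adj.
    + move/eqP: Hgh => Hg; subst g.
      by case/negP: (Hz (h - 1, o0)); adj.
    + have [x /andP [Hx1 Hx2]] := third g h.
      by case/negP: (Hz (x, o0)); adj.
    + move/eqP: Hgh => Hg; subst h.
      by case/negP: (Hz (1 + g, o0)); adj.
natsimp; bsimp => Hvw; exfalso; move: Hvw.
case/orP => [/andP [/eqP Ej Hgh] | /or4P [/andP [/eqP Ej Hgh] | /and3P [/eqP Ej Hj4 Hgh] | /and3P [/eqP Ej /eqP Ei Hgh] | /and3P [/eqP Ej /eqP Ei Hgh]]].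
- subst j; have [x /andP [Hx1 Hx2]] := third g h.
  case: (eqVneq i 4%N) => Ei4.
    by subst i; case/negP: (Hz (x, o1)); adj.
  have Hp : (i - 1 < m)%N by lia.
  by case/negP: (Hz (x, Ordinal Hp)); adj.
- subst j; have [x /andP [Hx1 Hx2]] := nb g h.
  by case/negP: (Hz (x, Ordinal Hi)); adj.
- subst i; have [x /andP [Hx1 Hx2]] := nb h g.
  by case/negP: (Hz (x, Ordinal Hj)); adj.
- subst i j; have [x /andP [Hx1 Hx2]] := third g h.
  by case/negP: (Hz (x, o1)); adj.
- subst i j; have [x /andP [Hx1 Hx2]] := nb g h.
  by case/negP: (Hz (x, Ordinal Hi)); adj.
Qed.

Lemma layer_A (v : V) : (v.2 : nat) = 0%N \/ (v.2 : nat) = 3%N -> Ap v.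
Proof.
case: v => g [i Hi] /= [Ei|Ei]; subst i.
- exists (g, o3); split; first by adj.
  move=> [h [j Hj]]; rewrite !Nall /Fn /=.
  case: j Hj => [|[|[|[|j]]]] Hj; natsimp; bsimp => //.
  by case: eqP.
- exists (g, o0); split; first by adj.
  move=> [h [j Hj]]; rewrite !Nall /Fn /=.
  case: j Hj => [|[|[|[|j]]]] Hj; natsimp; bsimp => //.
  by case: eqP.
Qed.

Lemma A_iff (v : V) : Ap v <-> (v.2 : nat) = 0%N \/ (v.2 : nat) = 3%N.
Proof. split; [exact: A_layer | exact: layer_A]. Qed.
Definition T2p (v : V) := ~ Ap v /\ exists w1 w2, [/\ Ap w1, Ap w2, e v w1, e v w2 & e w1 w2].

Lemma T2_layer (v : V) : T2p v -> (v.2 : nat) = 2%N.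
Proof.
case: v => g [i Hi] [nA [[h1 [j1 Hj1]] [[h2 [j2 Hj2]] [A1 A2 E1 E2 E12]]]] /=.
move/A_iff: A1 => /= A1; move/A_iff: A2 => /= A2.
have Hi0 : i <> 0%N by move=> Ei; apply: nA; apply/A_iff => /=; left.
have Hi3 : i <> 3%N by move=> Ei; apply: nA; apply/A_iff => /=; right.
case: (eqVneq i 2%N) => [//|/eqP Hi2]; exfalso.
move: E1 E2 E12; rewrite !Nall /Fn /=.
case: A1 => ->; case: A2 => ->;
case: (eqVneq i 1%N) => [Hi1|/eqP Hi1]; natsimp; bsimp => H1 H2 H3; discriminate.
Qed.

Lemma layer_T2 (v : V) : (v.2 : nat) = 2%N -> T2p v.
Proof.
case: v => g [i Hi] /= Ei; subst i; split.
  by move/A_iff => /= [].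
exists (1 + g, o0), (g, o3); split; try by adj.
- by apply/A_iff; left.
- by apply/A_iff; right.
Qed.

Definition L0p (v : V) := Ap v /\ exists w1 w2, [/\ w1 != w2, T2p w1, T2p w2, e v w1 & e v w2].

Lemma layer_L0 (v : V) : (v.2 : nat) = 0%N -> L0p v.
Proof.
case: v => g [i Hi] /= Ei; subst i; split.
  by apply/A_iff; left.
exists (1 + g, o2), (1 + (1 + g), o2); split; try by adj.
- rewrite xpair_eqE negb_and; apply/orP; left; zs.
- exact: layer_T2.
- exact: layer_T2.
Qed.

Lemma L0_layer (v : V) : L0p v -> (v.2 : nat) = 0%N.
Proof.
case: v => g [i Hi] [/A_iff /= [//|Ei] [[h1 [j1 Hj1]] [[h2 [j2 Hj2]] [N12 T1 T2 E1 E2]]]].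
subst i; exfalso.
move/T2_layer: T1 => /= Ej1; move/T2_layer: T2 => /= Ej2; subst j1 j2.
move: E1 E2; rewrite !Nall /Fn /=; natsimp; bsimp => /eqP E1 /eqP E2; subst h1 h2.
by move: N12; rewrite (bool_irrelevance Hj1 Hj2) eqxx.
Qed.

Definition L1p (v : V) := [/\ ~ Ap v, ~ T2p v & exists w, L0p w /\ e v w].

Lemma layer_L1 (v : V) : (v.2 : nat) = 1%N -> L1p v.
Proof.
case: v => g [i Hi] /= Ei; subst i; split.
- by move/A_iff => /= [].
- by move/T2_layer.
- exists (g - 1, o0); split; first exact: layer_L0.
  by adj.
Qed.

Lemma L1_layer (v : V) : L1p v -> (v.2 : nat) = 1%N.
Proof.
case: v => g [i Hi] [nA nT [[h [j Hj]] [/L0_layer /= Ej E]]] /=; subst j.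
have Hi0 : i <> 0%N by move=> Ei; apply: nA; apply/A_iff => /=; left.
have Hi3 : i <> 3%N by move=> Ei; apply: nA; apply/A_iff => /=; right.
have Hi2 : i <> 2%N by move=> Ei; apply: nT; apply: layer_T2.
case: (eqVneq i 1%N) => [//|/eqP Hi1]; exfalso.
by move: E; rewrite Nall /Fn /=; natsimp.
Qed.
Definition Autp (p : {perm V}) := forall u v, e (p u) (p v) = e u v.

Lemma Autp_inv (p : {perm V}) : Autp p -> Autp (p^-1)%g.
Proof. by move=> H u v; rewrite -H !permKV. Qed.

Lemma Ap_perm (p : {perm V}) (v : V) : Autp p -> Ap v -> Ap (p v).
Proof.
move=> H [w [Hvw Hz]]; exists (p w); split; first by rewrite H.
by move=> z; rewrite -(permKV p z) !H; exact: Hz.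
Qed.

Lemma Ap_permE (p : {perm V}) (v : V) : Autp p -> Ap (p v) <-> Ap v.
Proof.
move=> H; split; last exact: Ap_perm.
by move/(Ap_perm (Autp_inv H)); rewrite permK.
Qed.

Lemma T2_perm (p : {perm V}) (v : V) : Autp p -> T2p v -> T2p (p v).
Proof.
move=> H [nA [w1 [w2 [A1 A2 E1 E2 E12]]]]; split.
  by move/(Ap_permE v H).
exists (p w1), (p w2); split; rewrite ?H //; exact: Ap_perm.
Qed.

Lemma T2_permE (p : {perm V}) (v : V) : Autp p -> T2p (p v) <-> T2p v.
Proof.
move=> H; split; last exact: T2_perm.
by move/(T2_perm (Autp_inv H)); rewrite permK.
Qed.

Lemma L0_perm (p : {perm V}) (v : V) : Autp p -> L0p v -> L0p (p v).
Proof.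
move=> H [Av [w1 [w2 [N T1 T2 E1 E2]]]]; split; first exact: Ap_perm.
exists (p w1), (p w2); split; rewrite ?H ?(inj_eq perm_inj) //; exact: T2_perm.
Qed.

Lemma L1_perm (p : {perm V}) (v : V) : Autp p -> L1p v -> L1p (p v).
Proof.
move=> H [nA nT [w [L E]]]; split.
- by move/(Ap_permE v H).
- by move/(T2_permE v H).
- by exists (p w); split; [exact: L0_perm | rewrite H].
Qed.

Definition lay (v : V) : nat := v.2.

Lemma pE (p : {perm V}) (u : V) : lay (p u) = lay u -> p u = ((p u).1, u.2).
Proof. by rewrite /lay; case: (p u) => x l /= El; congr pair; apply: val_inj. Qed.

Lemma lay03 (p : {perm V}) (v : V) : Autp p -> (lay v <= 3)%N -> lay (p v) = lay v.
Proof.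
move=> H; case: v => g [i Hi]; rewrite /lay /=.
case: i Hi => [|[|[|[|i]]]] Hi //= _.
- by apply: L0_layer; apply: L0_perm H _; apply: layer_L0.
- by apply: L1_layer; apply: L1_perm H _; apply: layer_L1.
- by apply: T2_layer; apply: T2_perm H _; apply: layer_T2.
- have: Ap (p (g, Ordinal Hi)) by apply: Ap_perm H _; apply: layer_A; right.
  move/A_iff => [E0|//]; exfalso.
  have: L0p ((p^-1)%g (p (g, Ordinal Hi))) by apply: L0_perm (Autp_inv H) _; apply: layer_L0.
  by rewrite permK => /L0_layer.
Qed.

Lemma lay_ge4 (p : {perm V}) (v : V) : Autp p -> (4 <= lay v)%N -> (4 <= lay (p v))%N.
Proof.
move=> H H4; rewrite leqNgt; apply/negP => Hlt.
have Hle : (lay (p v) <= 3)%N by lia.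
have := lay03 (Autp_inv H) Hle.
rewrite permK => E; lia.
Qed.

Lemma lay_all (i : nat) : forall (p : {perm V}) (v : V), Autp p -> lay v = i -> lay (p v) = i.
Proof.
elim/ltn_ind: i => i IH p [g [j Hj]] H; rewrite {1}/lay /= => Ej; subst j.
case: (leqP i 3) => Hi3; first by rewrite lay03.
set v := (g, Ordinal Hj).
have Hl := lay_ge4 H (v := v) Hi3.
case: (eqVneq i 4%N) => [Ei4 | /eqP Hne].
- have Ev : e v (1 + g, o1) by rewrite /v; subst i; adj.
  move: Ev Hl; rewrite -H (pE (lay03 H (v := (1 + g, o1)) erefl)); case: (p v) => x [l Hl'] /=.
  rewrite /lay Nall /Fn /= => + Hl4; natsimp; bsimp; lia.
- have Hp : (i - 1 < m)%N by lia.
  have Ev : e v (1 + g, Ordinal Hp) by rewrite /v; adj.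
  have Hi1 : (i - 1 < i)%N by lia.
  move: Ev Hl; rewrite -H (pE (IH (i - 1)%N Hi1 p (1 + g, Ordinal Hp) H erefl)).
  case Epv : (p v) => [x [l Hl']] /=.
  rewrite /lay Nall /Fn /= => + Hl4; natsimp; bsimp => Hadj.
  case: (ltnP l i) => Hli; last first.
    move: Hadj; case: (ltngtP l i) => Hli2 //; first lia.
    by natsimp; bsimp.
  exfalso.
  have := IH l Hli (p^-1)%g (p v) (Autp_inv H).
  rewrite permK Epv /lay /= => /(_ erefl) /=; lia.
Qed.
Lemma aut_trans (p : {perm V}) : Autp p ->
  forall u : V, p u = (u.1 + (p (0, o0)).1, u.2).
Proof.
move=> H.
have pG (u : V) : p u = ((p u).1, u.2) := pE (lay_all H erefl).
have [s pg] : exists s : 'I_m -> 'Z_n -> 'Z_n, forall g i, p (g, i) = (s i g, i).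
  by exists (fun i g => (p (g, i)).1) => g i; rewrite {1}pG.
have E i j g h : e (s i g, i) (s j h, j) = e (g, i) (h, j).
  by rewrite -(H (g, i) (h, j)) (pg g i) (pg h j).
rewrite (pg 0 o0) /=.
have F02 g : s o0 g = s o2 g.
  by move: (E o0 o2 g g); rewrite !Nall /Fn /=; natsimp; bsimp; rewrite eqxx => /negbFE /eqP.
have F23 g : s o3 g = s o2 g.
  by move: (E o2 o3 g g); rewrite !Nall /Fn /=; natsimp; bsimp; rewrite eqxx => /eqP.
have F01 g : s o1 (1 + g) = 1 + s o0 g.
  by move: (E o0 o1 g (1 + g)); rewrite !Nall /Fn /=; natsimp; bsimp; rewrite eqxx => /eqP.
have F12 g : s o2 (D + g) = D + s o1 g.
  by move: (E o1 o2 g (D + g)); rewrite !Nall /Fn /=; natsimp; bsimp; rewrite eqxx => /eqP.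
have F14 g : s o4 g = s o1 g.
  by move: (E o1 o4 g g); rewrite !Nall /Fn /=; natsimp; bsimp; rewrite eqxx => /negbFE /eqP.
have Fst i (Hi : (4 <= i)%N) (Hi1 : (i.+1 < m)%N) g :
    s (Ordinal Hi1) g = s (Ordinal (ltnW Hi1)) g.
  move: (E (Ordinal (ltnW Hi1)) (Ordinal Hi1) g g); rewrite !Nall /Fn /=; natsimp; bsimp.
  by rewrite eqxx => /negbFE /eqP.
set c := s o0 0.
have Fu g : s o0 ((D + 1) + g) = (D + 1) + s o0 g.
  by rewrite F02 -addrA F12 F01 addrA.
have F0 g : s o0 g = g + c.
  have Hg : g = (nat_of_ord (g / (D + 1)))%:R * (D + 1).
    by rewrite natr_Zp divrK // Dunit.
  rewrite Hg; elim: (nat_of_ord _) => [|N IHN]; first by rewrite mul0r add0r.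
  have -> : (N.+1)%:R * (D + 1) = (D + 1) + N%:R * (D + 1).
    by rewrite -natr1 mulrDl mul1r addrC.
  by rewrite Fu IHN addrA.
have F1 g : s o1 g = g + c.
  have -> : g = 1 + (g - 1) by ring.
  by rewrite F01 F0; ring.
move=> [g [i Hi]]; rewrite pg /=; congr pair.
case: i Hi => [|[|[|[|i]]]] Hi.
- have -> : Ordinal Hi = o0 by apply: val_inj.
  exact: F0.
- have -> : Ordinal Hi = o1 by apply: val_inj.
  exact: F1.
- have -> : Ordinal Hi = o2 by apply: val_inj.
  by rewrite -F02.
- have -> : Ordinal Hi = o3 by apply: val_inj.
  by rewrite F23 -F02.
elim: i Hi => [|i IHi] Hi.
  have -> : Ordinal Hi = o4 by apply: val_inj.
  by rewrite F14.
have H4 : (4 <= i.+4)%N by [].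
by rewrite (Fst _ H4 Hi); apply: IHi.
Qed.
Lemma Fn_tr (i j : nat) (g h c : 'Z_n) : Fn i j (g + c) (h + c) = Fn i j g h.
Proof. by rewrite /Fn !addrA !(inj_eq (addIr c)). Qed.

Lemma trans_aut (c : 'Z_n) (u v : V) : e (u.1 + c, u.2) (v.1 + c, v.2) = e u v.
Proof. by case: u v => g i [h j]; rewrite !Nall /= Fn_tr. Qed.

Lemma part1 (p : {perm V}) : is_aut e p <-> exists g : 'Z_n, forall u, p u = Ztrans g u.
Proof.
split.
- move=> /forallP H.
  have Ha : Autp p by move=> u v; apply/eqP; exact: (forallP (H u) v).
  by exists (p (0, o0)).1 => u; rewrite /Ztrans; apply: aut_trans.
- case=> c Hc; apply/forallP => u; apply/forallP => v; apply/eqP.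
  by rewrite !Hc /Ztrans trans_aut.
Qed.
Lemma card_sum (T : finType) (P : pred T) : #|[set x | P x]| = (\sum_(x : T) (P x : nat))%N.
Proof.
rewrite -sum1_card big_mkcond /=; apply: eq_bigr => x _; rewrite inE; by case: (P x).
Qed.

Lemma card_pair (A B : finType) (P : A -> B -> bool) :
  #|[set w : A * B | P w.1 w.2]| = (\sum_(b : B) #|[set a | P a b]|)%N.
Proof.
rewrite card_sum -(pair_big predT predT (fun a b => (P a b : nat))) /= exchange_big.
by apply: eq_bigr => b _; rewrite card_sum.
Qed.

Lemma sum_sparse (T : finType) (F : T -> nat) (S : seq T) : uniq S ->
  (forall l, l \notin S -> F l = 0%N) -> (\sum_(l : T) F l = \sum_(l <- S) F l)%N.
Proof.
move=> U H; rewrite (bigID (mem S)) /= [X in (_ + X)%N]big1 ?addn0; last by move=> l /H.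
by rewrite big_uniq.
Qed.

Lemma card_V (v : V) : #|[set w | e v w]| = (\sum_(l : 'I_m) #|[set h | e v (h, l)]|)%N.
Proof. by rewrite -card_pair; apply: eq_card => -[h l]; rewrite !inE. Qed.

Lemma eq_shift (x c h : 'Z_n) : (x == c + h) = (h == x - c).
Proof. by apply/eqP/eqP => [->|->]; ring. Qed.

Ltac zero_out := move=> [l Hl]; rewrite !inE -!val_eqE /= => Hn; apply/eqP;
  rewrite cards_eq0; apply/eqP/setP => h; rewrite !inE Nall /Fn /=; natsimp; bsimp.
Ltac setE := apply/setP => ?; rewrite !inE Nall /Fn /=; natsimp; bsimp;
  first [ done | by rewrite eq_sym | by rewrite eq_shift | by rewrite eq_sym eq_shift ].

Definition om1 : 'I_m := @Ordinal m k.+4 (ltnSn _).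

Lemma deg03 (g : 'Z_n) (i : nat) (Hi : (i < m)%N) : (i <= 3)%N ->
  #|[set w | e (g, Ordinal Hi) w]| = (n + n)%N.
Proof.
case: i Hi => [|[|[|[|i]]]] Hi // _.
- rewrite card_V (sum_sparse (S := [:: o1; o2; o3])) //; last by zero_out.
  rewrite !big_cons big_nil.
  have -> : [set h | e (g, Ordinal Hi) (h, o1)] = [set 1 + g] by setE.
  have -> : [set h | e (g, Ordinal Hi) (h, o2)] = [set~ g] by setE.
  have -> : [set h | e (g, Ordinal Hi) (h, o3)] = [set: 'Z_n] by setE.
  by rewrite cards1 cardsC1 cardsT card_ord /Zp_trunc /=; lia.
- rewrite card_V (sum_sparse (S := [:: o0; o1; o2; o4])) //; last by zero_out.
  rewrite !big_cons big_nil.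
  have -> : [set h | e (g, Ordinal Hi) (h, o0)] = [set g - 1] by setE.
  have -> : [set h | e (g, Ordinal Hi) (h, o1)] = [set~ g] by setE.
  have -> : [set h | e (g, Ordinal Hi) (h, o2)] = [set D + g] by setE.
  have -> : [set h | e (g, Ordinal Hi) (h, o4)] = [set~ g] by setE.
  by rewrite !cards1 !cardsC1 card_ord /Zp_trunc /=; lia.
- rewrite card_V (sum_sparse (S := [:: o0; o1; o2; o3])) //; last by zero_out.
  rewrite !big_cons big_nil.
  have -> : [set h | e (g, Ordinal Hi) (h, o0)] = [set~ g] by setE.
  have -> : [set h | e (g, Ordinal Hi) (h, o1)] = [set g - D] by setE.
  have -> : [set h | e (g, Ordinal Hi) (h, o2)] = [set~ g] by setE.
  have -> : [set h | e (g, Ordinal Hi) (h, o3)] = [set g] by setE.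
  by rewrite !cards1 !cardsC1 card_ord /Zp_trunc /=; lia.
- rewrite card_V (sum_sparse (S := [:: o0; o2; om1])) //; last by zero_out.
  rewrite !big_cons big_nil.
  have -> : [set h | e (g, Ordinal Hi) (h, o0)] = [set: 'Z_n] by setE.
  have -> : [set h | e (g, Ordinal Hi) (h, o2)] = [set g] by setE.
  have -> : [set h | e (g, Ordinal Hi) (h, om1)] = [set~ g] by setE.
  by rewrite cards1 cardsC1 cardsT card_ord /Zp_trunc /=; lia.
Qed.

Lemma deg4 (g : 'Z_n) (i : nat) (Hi : (i < m)%N) : (4 <= i)%N ->
  #|[set w | e (g, Ordinal Hi) w]| = (n + n)%N.
Proof.
move=> H4.
have [nx [Hnx Hnxs]] : exists nx, (nx < m)%N /\ (((i < m.-1)%N /\ nx = i.+1) \/ (i = m.-1 /\ nx = 3%N)).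
  case: (ltnP i m.-1) => H; first by exists i.+1; split; [lia | left; lia].
  by exists 3%N; split; [lia | right; lia].
have [pv [Hpv Hpvs]] : exists pv, (pv < m)%N /\ (((4 < i)%N /\ pv = i.-1) \/ (i = 4 /\ pv = 1%N)).
  case: (ltnP 4 i) => H; first by exists i.-1; split; [lia | left; lia].
  by exists 1%N; split; [lia | right; lia].
have N12 : (1 + g != g - 1) by zs.
case: Hnxs => [[H1 E1]|[H1 E1]]; case: Hpvs => [[H2 E2]|[H2 E2]]; subst nx pv.
all: rewrite card_V (sum_sparse (S := [:: Ordinal Hi; Ordinal Hnx; Ordinal Hpv])); [
  | rewrite /= !inE -!val_eqE /=; natsimp; done
  | move=> [l Hl]; rewrite !inE -!val_eqE /= => Hn; apply/eqP;
    rewrite cards_eq0; apply/eqP/setP => h; rewrite !inE Nall /Fn /=;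
    case: (leqP 4 l) => ?; natsimp; bsimp; done].
all: rewrite !big_cons big_nil.
all: have -> : [set h | e (g, Ordinal Hi) (h, Ordinal Hi)] = [set 1 + g; g - 1] by setE.
all: have -> : [set h | e (g, Ordinal Hi) (h, Ordinal Hnx)] = [set~ g] by setE.
all: have -> : [set h | e (g, Ordinal Hi) (h, Ordinal Hpv)] = [set~ g] by setE.
all: by rewrite cards2 N12 !cardsC1 card_ord /Zp_trunc /=; lia.
Qed.

Lemma deg (v : V) : #|[set w | e v w]| = (n + n)%N.
Proof.
case: v => g [i Hi]; case: (leqP i 3) => H; [exact: deg03 | exact: deg4].
Qed.
Lemma e_irr (v : V) : e v v = false.
Proof.
case: v => g [i Hi]; rewrite Nall /Fn /=.
have H1 : (g == 1 + g) = false by apply/negbTE; zs.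
by case: i Hi => [|[|[|[|i]]]] Hi; natsimp; bsimp; rewrite ?eqxx ?H1.
Qed.

Definition trf (c : 'Z_n) (u : V) : V := (u.1 + c, u.2).
Lemma trf_inj c : injective (trf c).
Proof. move=> [g i] [h j] H; have := congr1 fst H; have := congr1 snd H; rewrite /trf /= => -> /(addIr c) E; by rewrite E. Qed.
Definition tr (c : 'Z_n) : {perm V} := perm (@trf_inj c).
Lemma trE c u : tr c u = (u.1 + c, u.2).
Proof. by rewrite permE. Qed.

Lemma trM : {in [set: 'Z_n] &, {morph tr : x y / (x * y)%g >-> (x * y)%g}}.
Proof.
move=> x y _ _; apply/permP => u; rewrite permM !trE /=; congr pair; exact: addrA.
Qed.

Definition trm : {morphism [set: 'Z_n] >-> {perm V}} := Morphism trM.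

Lemma trm_inj : ('injm trm)%g.
Proof.
apply/injmP => x y _ _ /(congr1 (fun p : {perm V} => p (0, o0))).
by rewrite /= !trE /= !add0r => -[].
Qed.

Lemma AutA : Aut_graph e = (trm @* [set: 'Z_n])%g.
Proof.
apply/setP => p; rewrite inE; apply/idP/idP.
- move/part1 => [c Hc]; have -> : p = trm c by apply/permP => u; rewrite Hc /= trE.
  by rewrite mem_morphim ?inE.
- case/morphimP => c _ _ ->; apply/part1; exists c => u; by rewrite /Ztrans /= trE.
Qed.

Definition Lay (l : 'I_m) : {set V} := [set w : V | w.2 == l].

Lemma orbA (v : V) : orbit 'P ((trm @* [set: 'Z_n])%g) v = Lay v.2.
Proof.
apply/setP => w; rewrite inE; apply/orbitP/eqP => [[x /morphimP [c _ _ ->] <-] | Ew].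
  by rewrite -[LHS]/((tr c v).2) trE.
exists (trm (w.1 - v.1)); first by rewrite mem_morphim ?inE.
rewrite -[LHS]/(tr (w.1 - v.1) v) trE; case: w Ew => h j /= ->; congr pair; ring.
Qed.

Lemma part2 (gT : finGroupType) (G : {group gT}) : cyclic G -> #|G| = n -> mGRR m G.
Proof.
move=> HG Hn.
exists _, e; split.
- by move=> u v; rewrite /Delta orbC.
- exact: e_irr.
- by exists (n + n)%N; exact: deg.
have I1 : [set: 'Z_n] \isog ((trm @* [set: 'Z_n])%g) := sub_isog (subxx _) trm_inj.
have I2 : [set: 'Z_n] \isog G.
  have Hc : cyclic [set: 'Z_n] by rewrite Zp_cycle cycle_cyclic.
  by rewrite (isog_cyclic_card _ Hc) HG cardsT card_ord Hn /Zp_trunc /=.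
have I3 : ((trm @* [set: 'Z_n])%g) \isog G := isog_trans (isog_symr I1) I2.
exists [group of (trm @* [set: 'Z_n])%g]; first by rewrite AutA.
split => //.
- move=> x /morphimP [c _ _ ->] v /=; rewrite trE => Ev.
  have Hc : c = 0.
    have := congr1 fst Ev; rewrite /= -{2}[v.1]addr0; exact: addrI.
  by apply/permP => u; rewrite /= trE perm1 Hc addr0; case: u.
- have -> : [set orbit 'P ((trm @* [set: 'Z_n])%g) v | v : V] = [set Lay l | l : 'I_m].
    apply/setP => X; apply/imsetP/imsetP => [[v _ ->]|[l _ ->]].
      by exists v.2 => //; exact: orbA.
    by exists (0, l) => //; rewrite orbA.
  rewrite card_imset ?card_ord // => l1 l2 E.
  have : ((0 : 'Z_n), l1) \in Lay l1 by rewrite inE.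
  by rewrite E inE => /eqP.
- by rewrite AutA.
Qed.
End S.

Theorem part1_main :
  (forall (n m delta : nat), 3 <= n -> 5 <= m -> delta < n -> coprime delta.+1 n ->
     forall p : {perm 'Z_n * 'I_m},
       is_aut (Delta m delta) p <->
       exists g : 'Z_n, forall u, p u = Ztrans g u).
Proof.
move=> n m dl Hn Hm _ Hc.
have [a Ea] : exists a, n = a.+3 by exists (n - 3); lia.
have [k Ek] : exists k, m = k.+1.+4 by exists (m - 5); lia.
subst n m; exact: part1.
Qed.

Theorem lemma4p7 :
  (forall (n m delta : nat), 3 <= n -> 5 <= m -> delta < n -> coprime delta.+1 n ->
     forall p : {perm 'Z_n * 'I_m},
       is_aut (Delta m delta) p <->
       exists g : 'Z_n, forall u, p u = Ztrans g u)
  /\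
  (forall (gT : finGroupType) (G : {group gT}), cyclic G -> 3 <= #|G| ->
     forall m, 5 <= m -> mGRR m G).
Proof.
split; first exact: part1_main.
move=> gT G HG H3 m Hm.
have [a Ea] : exists a, #|G| = a.+3 by exists (#|G| - 3); lia.
have [k Ek] : exists k, m = k.+1.+4 by exists (m - 5); lia.
subst m; exact: (@part2 a k 0 (coprime1n _) gT G HG Ea).
Qed.
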